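(* Let $\Bbbk$ be an algebraically closed field of characteristic $2$ and let $\mathfrak{u}(\mathfrak{m})$ be the algebra generated by $a,b,c$ with relations $ab+ba=c$, $ac+ca=a$, $bc+cb=b$, $a^4=b^4=0$, $c^2+c=0$. Then every two-dimensional $\mathfrak{u}(\mathfrak{m})$-module is trivial (i.e. $a,b,c$ act by $0$). Consequently $\dim \operatorname{Ext}^1_{\mathfrak{u}(\mathfrak{m})}(V_0,V_0)=0$, where $V_0$ is the one-dimensional module on which $a,b,c$ act by $0$. *)

(* Defs.v *)
From HB Require Import structures.
From mathcomp Require Import all_boot all_order all_algebra.
Set Implicit Arguments. Unset Strict Implicit. Unset Printing Implicit Defensive.
Import GRing.Theory.
Local Open Scope ring_scope.

(* A representation of u(m) on K^n (column vectors, left action):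
   matrices A, B, C (actions of a, b, c) satisfying the defining relations
   ab+ba=c, ac+ca=a, bc+cb=b, a^4=b^4=0, c^2+c=0. *)
Definition is_um_rep (K : fieldType) (n : nat) (A B C : 'M[K]_n) : Prop :=
  [/\ A *m B + B *m A = C,
      A *m C + C *m A = A,
      B *m C + C *m B = B
    & [/\ A *m A *m A *m A = 0,
      B *m B *m B *m B = 0
    & C *m C + C = 0]].

(* The module structure (A,B,C) on K^2 is an extension
   0 -> V0 -> K^2 -> V0 -> 0, where the submodule V0 is the line spanned by
   v != 0: a,b,c kill v, and act by zero on the quotient K^2 / <v>. *)
Definition is_ext_V0_V0 (K : fieldType) (A B C : 'M[K]_2) (v : 'cV[K]_2) : Prop :=
  [/\ v != 0,
      A *m v = 0, B *m v = 0, C *m v = 0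
    & forall x : 'cV[K]_2, exists s t u : K,
        [/\ A *m x = s *: v, B *m x = t *: v & C *m x = u *: v]].

(* Such an extension splits: there is a complement to <v> which is a
   submodule (necessarily isomorphic to V0, i.e. killed by a,b,c). *)
Definition ext_splits (K : fieldType) (A B C : 'M[K]_2) (v : 'cV[K]_2) : Prop :=
  exists w : 'cV[K]_2,
    [/\ \det (row_mx v w) != 0, A *m w = 0, B *m w = 0 & C *m w = 0].

(* Main.v *)
Require Import Defs.
From HB Require Import structures.
From mathcomp Require Import all_boot all_order all_algebra.
Import GRing.Theory.
Local Open Scope ring_scope.

Lemma det22 (K : comNzRingType) (M : 'M[K]_2) : \det M = M 0 0 * M 1 1 - M 0 1 * M 1 0.
Proof.
rewrite (expand_det_row _ 0) !big_ord_recl big_ord0 /cofactor !det_mx11 !mxE /=.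
have l1 : lift 0 (0 : 'I_1) = 1 :> 'I_2 by apply/val_inj.
have l0 : lift 1 (0 : 'I_1) = 0 :> 'I_2 by apply/val_inj.
have o0 : ord0 = 0 :> 'I_2 by apply/val_inj.
have o1 : lift ord0 (ord0 : 'I_1) = 1 :> 'I_2 by apply/val_inj.
rewrite o1 /bump /= -?o0 ?l1 ?l0 /=.
by rewrite expr0 expr1 mul1r mulN1r addr0 mulrN.
Qed.

Lemma det_rowmx (K : comNzRingType) (v w : 'cV[K]_2) :
  \det (row_mx v w) = v 0 0 * w 1 0 - w 0 0 * v 1 0.
Proof.
rewrite det22.
have l : (0 : 'I_2) = lshift 1 (0 : 'I_1) by apply/val_inj.
have r : (1 : 'I_2) = rshift 1 (0 : 'I_1) by apply/val_inj.
rewrite {2 4}l {2 3}r; by rewrite !(row_mxEl v w) !(row_mxEr v w).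
Qed.

Lemma part1 (K : fieldType) (hK : 2%N \in [pchar K]) (A B C : 'M[K]_2) :
  is_um_rep A B C -> [/\ A = 0, B = 0 & C = 0].
Proof.
case=> hAB hAC hBC [_ _ hCC].
have two : (2%:R : K) = 0 by apply: pcharf0.
have xx : forall x : K, x + x = 0 by move=> x; rewrite -mulr2n -mulr_natr two mulr0.
have tr : \tr C = 0 by rewrite -hAB mxtraceD mxtrace_mulC xx.
have e : forall i j, (C *m C + C) i j = 0 by move=> i j; rewrite hCC mxE.
have e00 := e 0 0; have e01 := e 0 1; have e10 := e 1 0.
have o0 : ord0 = 0 :> 'I_2 by apply/val_inj.
have o1 : lift ord0 (ord0 : 'I_1) = 1 :> 'I_2 by apply/val_inj.
rewrite !mxE !big_ord_recl !big_ord0 /= ?o0 ?o1 in e00 e01 e10.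
rewrite /mxtrace !big_ord_recl big_ord0 /= ?o0 ?o1 in tr.
have i2 : forall i : 'I_2, i = 0 \/ i = 1.
  by case=> [[|[|n]] hi] //; [left|right]; apply/val_inj.
set p := C 0 0 in e00 e01 e10 tr; set q := C 0 1 in e00 e01 e10 tr.
set r := C 1 0 in e00 e01 e10 tr; set s := C 1 1 in e00 e01 e10 tr.
have s1 : s = p.
  by rewrite addr0 in tr; rewrite -[s]add0r -(xx p) -addrA tr addr0.
rewrite s1 addr0 (mulrC q p) xx add0r in e01.
rewrite s1 addr0 (mulrC p r) xx add0r in e10.
have hC : C = p%:M.
  apply/matrixP => i j; rewrite !mxE.
  by case: (i2 i) => ->; case: (i2 j) => -> //=; rewrite ?s1.
have hA : A = 0.
  by rewrite -hAC hC mul_mx_scalar mul_scalar_mx -scalerDl xx scale0r.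
have hB : B = 0.
  by rewrite -hBC hC mul_mx_scalar mul_scalar_mx -scalerDl xx scale0r.
split => //; by rewrite -hAB hA !mul0mx mulmx0 addr0.
Qed.

Theorem lemma3p4 (K : closedFieldType) (hK : 2%N \in [pchar K]) :
  (forall A B C : 'M[K]_2, is_um_rep A B C -> [/\ A = 0, B = 0 & C = 0]) /\
  (forall (A B C : 'M[K]_2) (v : 'cV[K]_2),
      is_um_rep A B C -> is_ext_V0_V0 A B C v -> ext_splits A B C v).
Proof.
split; first by move=> A B C; exact: part1.
move=> A B C v /(@part1 K hK) [-> -> ->] [vn _ _ _ _].
have i2 : forall i : 'I_2, i = 0 \/ i = 1.
  by case=> [[|[|n]] hi] //; [left|right]; apply/val_inj.
have [v0|v0] := eqVneq (v 0 0) 0.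
- exists (\col_i (i == 0)%:R); rewrite !mul0mx; split => //.
  rewrite det_rowmx !mxE /= v0 mulr0 mul1r sub0r oppr_eq0.
  apply/eqP => h; move/eqP: vn; apply; apply/matrixP => i j.
  by rewrite mxE (ord1 j); case: (i2 i) => ->.
- exists (\col_i (i == 1)%:R); rewrite !mul0mx; split => //.
  by rewrite det_rowmx !mxE /= mulr1 mul0r subr0.
Qed.
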